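(* Let $\Omega$ be a finite set, let $k \geq 2$ be an integer and let $f \colon \mathbb{N}_0 \to \Omega$ be a sequence. Then the following are equivalent: (1) $f$ is asymptotically $k$-automatic; (2) there exist $d \in \mathbb{N}$, sequences $f_0,f_1,\dots,f_{d-1}\colon \mathbb{N}_0\to\Omega$ and a $k$-automatic map $\phi\colon \Sigma_k^* \to \Sigma_d$ such that for each word $u \in \Sigma_k^*$ of length $\alpha := |u|$ we have $f(k^\alpha n + [u]_k) = f_{\phi(u)}(n)$ for almost all $n \in \mathbb{N}_0$.
   Context: $\mathbb{N}_0=\{0,1,2,\dots\}$, $\mathbb{N}=\{1,2,\dots\}$. For $A\subset\mathbb{N}_0$, $\bar d(A) = \limsup_{N\to\infty} |A\cap\{0,\dots,N-1\}|/N$; a property holds for almost all $n\in\mathbb{N}_0$ if the set of $n$ where it fails has upper density $0$. Sequences $f,g\colon\mathbb{N}_0\to\Omega$ are asymptotically equal, $f\simeq g$, if $f(n)=g(n)$ for almost all $n$. The $k$-kernel of a sequence $f$ is $\mathcal{N}_k(f) = \{ n \mapsto f(k^\alpha n + r) : \alpha, r \in \mathbb{N}_0,\ r < k^\alpha\}$, and $f$ is asymptotically $k$-automatic if $\mathcal{N}_k(f)/{\simeq}$ is finite. $\Sigma_k=\{0,1,\dots,k-1\}$, $\Sigma_k^*$ is the set of all finite words over $\Sigma_k$ (including the empty word), $|u|$ is the length of $u$, and $[u]_k$ is the integer whose base-$k$ expansion (most significant digit first) is $u$ (with $[\text{empty word}]_k=0$). For a map $\phi\colon\Sigma_k^*\to\Omega'$,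 its $k$-kernel is $\{u \mapsto \phi(uv) : v \in \Sigma_k^*\}$ (where $uv$ is concatenation), and $\phi$ is $k$-automatic if this set is finite. *)

(* Defs.v *)
From mathcomp Require Import all_boot all_order all_algebra.
Set Implicit Arguments. Unset Strict Implicit. Unset Printing Implicit Defensive.
Import Order.TTheory GRing.Theory Num.Theory.

Definition count_below (A : pred nat) (N : nat) : nat := count A (iota 0 N).

(* upper density of A is 0, i.e. limsup_N |A ∩ [0,N)|/N = 0 (it is >= 0
   trivially), unfolded: for every rational eps > 0, eventually
   |A ∩ [0,N)| <= eps * N. *)
Definition upper_density_zero (A : pred nat) : Prop :=
  forall eps : rat, (0 < eps)%R ->
    exists N0 : nat, forall N : nat, (N0 <= N)%N ->
      ((count_below A N)%:R <= eps * N%:R :> rat)%R.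

Definition almost_all (P : pred nat) : Prop :=
  upper_density_zero [pred n | ~~ P n].

Definition asym_eq (Omega : eqType) (f g : nat -> Omega) : Prop :=
  almost_all [pred n | f n == g n].

Definition kernel_elt (Omega : Type) (k : nat) (f : nat -> Omega)
    (alpha r : nat) : nat -> Omega :=
  fun n => f (k ^ alpha * n + r).

(* N_k(f)/≃ is finite: there are finitely many kernel elements
   (indexed by pairs (alpha, r) with r < k^alpha) such that every kernel
   element is asymptotically equal to one of them. *)
Definition asymptotically_automatic (Omega : eqType) (k : nat)
    (f : nat -> Omega) : Prop :=
  exists s : seq (nat * nat),
    all (fun p => p.2 < k ^ p.1) s /\
    forall alpha r : nat, r < k ^ alpha ->
      exists2 p, p \in s &
        asym_eq (kernel_elt k f alpha r) (kernel_elt k f p.1 p.2).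

(* [u]_k : value of the base-k word u, most significant digit first;
   [empty]_k = 0 *)
Definition word_val (k : nat) (u : seq 'I_k) : nat :=
  foldl (fun acc (d : 'I_k) => acc * k + d) 0 u.

(* phi : Σ_k^* -> Omega' is k-automatic: its k-kernel
   { u |-> phi (u v) : v ∈ Σ_k^* } is a finite set of maps. *)
Definition automatic_map (k : nat) (Omega' : Type)
    (phi : seq 'I_k -> Omega') : Prop :=
  exists V : seq (seq 'I_k),
    forall v : seq 'I_k, exists2 w, w \in V &
      forall u : seq 'I_k, phi (u ++ v) = phi (u ++ w).

(* Main.v *)
Require Import Defs.
From mathcomp Require Import all_boot all_order all_algebra.
From mathcomp Require Import ring lra zify.
From Stdlib Require Import ClassicalEpsilon.
Set Implicit Arguments. Unset Strict Implicit. Unset Printing Implicit Defensive.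
Import Order.TTheory GRing.Theory Num.Theory.

Lemma count_belowS (A : pred nat) N : count_below A N.+1 = count_below A N + A N.
Proof. by rewrite /count_below -addn1 iotaD count_cat /= addn0 add0n. Qed.

Lemma count_below_mono (A : pred nat) N j : count_below A N <= count_below A (N + j).
Proof. by rewrite /count_below iotaD count_cat leq_addr. Qed.

Lemma udz_mono (A B : pred nat) : (forall n, A n -> B n) ->
  upper_density_zero B -> upper_density_zero A.
Proof.
move=> AB HB eps e0; have [N0 HN0] := HB eps e0; exists N0 => N /HN0.
apply: le_trans; rewrite ler_nat; apply: sub_count => n; exact: AB.
Qed.

Lemma udz_U (A B : pred nat) : upper_density_zero A -> upper_density_zero B ->
  upper_density_zero (predU A B).
Proof.
move=> HA HB eps e0.
have e2 : (0 < eps / 2 :> rat)%R by rewrite divr_gt0.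
have [N1 H1] := HA _ e2; have [N2 H2] := HB _ e2.
exists (maxn N1 N2) => N; rewrite geq_max => /andP[h1 h2].
have := H1 _ h1; have := H2 _ h2.
have hc : count_below (predU A B) N <= count_below A N + count_below B N.
  by rewrite /count_below -count_predUI leq_addr.
move: hc; rewrite -(ler_nat rat) natrD => hc h2' h1'.
apply: (le_trans hc); lra.
Qed.

Lemma udz_comp (B : pred nat) m r : 0 < m -> upper_density_zero B ->
  upper_density_zero [pred n | B (m * n + r)].
Proof.
move=> m0 HB eps e0.
have hcl : forall N, count_below [pred n | B (m * n + r)] N <= count_below B (m * N + r).
  elim=> [|N IH]; first by rewrite /count_below.
  rewrite count_belowS /= (leq_trans (leq_add IH (leqnn _))) //.
  rewrite -count_belowS.
  have -> : m * N.+1 + r = (m * N + r).+1 + (m - 1) by rewrite mulnS; lia.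
  exact: count_below_mono.
have mR : ((2 * m)%:R != 0 :> rat)%R by rewrite pnatr_eq0; lia.
have e2 : (0 < eps / (2 * m)%:R :> rat)%R by rewrite divr_gt0 // ltr0n; lia.
have [N1 H1] := HB _ e2.
exists (maxn N1 r) => N; rewrite geq_max => /andP[h1 h2].
have h3 : N1 <= m * N + r by nia.
apply: (le_trans _ (le_trans (H1 _ h3) _)); first by rewrite ler_nat.
have hle : m * N + r <= 2 * m * N by nia.
apply: (@le_trans _ _ (eps / (2 * m)%:R * (2 * m * N)%:R)%R).
  by rewrite ler_wpM2l ?ler_nat // ltW.
by rewrite (natrM _ (2 * m) N) mulrA divfK.
Qed.

Lemma asym_refl (O : eqType) (g : nat -> O) : asym_eq g g.
Proof.
move=> eps e0; exists 0 => N _.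
rewrite /count_below (eq_count (a2 := pred0)); last by move=> n /=; rewrite eqxx.
by rewrite count_pred0 mulr_ge0 // ltW.
Qed.

Lemma asym_ext (O : eqType) (g g' h h' : nat -> O) :
  (forall n, g n = g' n) -> (forall n, h n = h' n) -> asym_eq g h -> asym_eq g' h'.
Proof. by move=> eg eh; apply: udz_mono => n /=; rewrite eg eh. Qed.

Lemma asym_sym (O : eqType) (g h : nat -> O) : asym_eq g h -> asym_eq h g.
Proof. by apply: udz_mono => n /=; rewrite eq_sym. Qed.

Lemma asym_trans (O : eqType) (g h l : nat -> O) :
  asym_eq g h -> asym_eq h l -> asym_eq g l.
Proof.
move=> H1 H2; apply: (udz_mono _ (udz_U H1 H2)) => n /=.
case: (g n =P h n) => [->|] //=.
Qed.

Lemma asym_comp (O : eqType) (g h : nat -> O) m r : 0 < m -> asym_eq g h ->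
  asym_eq (fun n => g (m * n + r)) (fun n => h (m * n + r)).
Proof. by move=> m0 H; exact: (udz_comp (B := [pred n | g n != h n]) r m0 H). Qed.

Lemma foldl_val k a (v : seq 'I_k) :
  foldl (fun acc (d : 'I_k) => acc * k + d) a v = a * k ^ size v + word_val v.
Proof.
rewrite /word_val; elim: v a => [|x v IH] a /=; first by rewrite expn0 muln1 addn0.
rewrite (IH (a * k + x)) (IH (0 * k + x)) expnS; ring.
Qed.

Lemma word_val_cat k (u v : seq 'I_k) :
  word_val (u ++ v) = word_val u * k ^ size v + word_val v.
Proof. by rewrite {1}/word_val foldl_cat foldl_val. Qed.

Lemma word_val_lt k (u : seq 'I_k) : word_val u < k ^ size u.
Proof.
elim: u => [|x v IH] //.
have -> : word_val (x :: v) = x * k ^ size v + word_val v.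
  by rewrite -cat1s word_val_cat /word_val /= mul0n add0n.
rewrite /= expnS; have := ltn_ord x; move: IH; nia.
Qed.

Fixpoint digits k (hk : 0 < k) (a r : nat) : seq 'I_k :=
  match a with
  | 0 => [::]
  | a'.+1 => rcons (digits hk a' (r %/ k)) (Ordinal (ltn_pmod r hk))
  end.

Lemma digits_size k (hk : 0 < k) a r : size (digits hk a r) = a.
Proof. by elim: a r => [|a IH] r //=; rewrite size_rcons IH. Qed.

Lemma digits_val k (hk : 0 < k) a r : r < k ^ a -> word_val (digits hk a r) = r.
Proof.
elim: a r => [|a IH] r /=; first by rewrite expn0; case: r.
move=> hr; rewrite -cats1 word_val_cat IH /=.
  by rewrite /word_val /= expn1; have := divn_eq r k; lia.
by rewrite ltn_divLR // -expnSr.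
Qed.

Lemma kernel_cat (O : Type) k (f : nat -> O) (u v : seq 'I_k) n :
  kernel_elt k f (size (u ++ v)) (word_val (u ++ v)) n =
  kernel_elt k f (size v) (word_val v) (k ^ size u * n + word_val u).
Proof.
rewrite /kernel_elt size_cat word_val_cat expnD; congr f; ring.
Qed.
From Stdlib Require Import ClassicalEpsilon.

Definition decb (P : Prop) : bool := if excluded_middle_informative P then true else false.
Lemma decbP P : reflect P (decb P).
Proof. by rewrite /decb; case: excluded_middle_informative => h; constructor. Qed.

Theorem lemma2p3 (Omega : finType) (k : nat) (hk : 2 <= k)
    (f : nat -> Omega) :
  asymptotically_automatic k f <->
  exists (d : nat) (hd : 0 < d) (F : 'I_d -> nat -> Omega)
         (phi : seq 'I_k -> 'I_d),
    automatic_map phi /\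
    forall u : seq 'I_k,
      almost_all [pred n | f (k ^ size u * n + word_val u) == F (phi u) n].
Proof.
have k0 : 0 < k by lia.
pose g (u : seq 'I_k) := kernel_elt k f (size u) (word_val u).
split.
- move=> [s [Hs Hcov]].
  case: s Hs Hcov => [|p0 s'] Hs Hcov.
    by have [p] := Hcov 0 0 (ltnSn 0).
  pose s := p0 :: s'.
  pose F (i : 'I_(size s').+1) := kernel_elt k f (nth p0 s i).1 (nth p0 s i).2.
  pose phi u : 'I_(size s').+1 := odflt ord0 [pick i | decb (asym_eq (g u) (F i))].
  have hphi : forall u, asym_eq (g u) (F (phi u)).
    move=> u; have [p hp ha] := Hcov (size u) (word_val u) (word_val_lt u).
    have hi : index p s < (size s').+1 by rewrite -/(size s) index_mem.
    rewrite /phi; case: pickP => [j /decbP //| Hn].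
    exfalso; move: (Hn (Ordinal hi)) => /decbP; apply.
    by rewrite /F /= nth_index.
  have hphi_eq : forall u u', asym_eq (g u) (g u') -> phi u = phi u'.
    move=> u u' Huu; rewrite /phi; congr odflt; apply: eq_pick => i /=.
    apply/decbP/decbP => h.
      exact: asym_trans (asym_sym Huu) h.
    exact: asym_trans Huu h.
  exists (size s').+1, (ltn0Sn _), F, phi; split; last first.
    by move=> u; exact: hphi u.
  exists (map (fun p => digits k0 p.1 p.2) s) => v.
  have [p hp ha] := Hcov _ _ (word_val_lt v).
  exists (digits k0 p.1 p.2); first exact: (map_f (fun p => digits k0 p.1 p.2) hp).
  move=> u; apply: hphi_eq.
  have hpl : p.2 < k ^ p.1 by exact: (allP Hs p hp).
  apply: (asym_ext (g := fun n => kernel_elt k f (size v) (word_val v) (k ^ size u * n + word_val u))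
                   (h := fun n => kernel_elt k f p.1 p.2 (k ^ size u * n + word_val u))).
  + by move=> n; rewrite /g kernel_cat.
  + by move=> n; rewrite /g kernel_cat digits_size digits_val.
  + by apply: asym_comp => //; rewrite expn_gt0 k0.
- move=> [d [hd [F [phi [_ H]]]]].
  have H' : forall u, asym_eq (g u) (F (phi u)) := H.
  pose rep (i : 'I_d) : seq 'I_k :=
    match excluded_middle_informative (exists u, phi u == i) with
    | left h => xchoose h | right _ => [::] end.
  have hrep : forall u, phi (rep (phi u)) = phi u.
    move=> u; rewrite /rep; case: excluded_middle_informative => h.
      exact/eqP/(xchooseP h).
    by exfalso; apply: h; exists u.
  exists [seq (size (rep i), word_val (rep i)) | i <- enum 'I_d]; split.
    by apply/allP => p /mapP [i _ ->] /=; exact: word_val_lt.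
  move=> a r hr; pose u := digits k0 a r.
  exists (size (rep (phi u)), word_val (rep (phi u))).
    by apply: (map_f (fun i => (size (rep i), word_val (rep i)))); rewrite mem_enum.
  have -> : kernel_elt k f a r = g u by rewrite /g /u digits_size digits_val.
  apply: asym_trans (H' u) _; apply: asym_sym.
  by have := H' (rep (phi u)); rewrite hrep.
Qed.
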